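(* Let $a^{(1)},\dots,a^{(\ell)}\in\mathbb{F}$ be pairwise non-conjugate, let $K_i=K_{a^{(i)}}$, and for each $i$ let $\beta^{(i)}_1,\dots,\beta^{(i)}_{n_i}\in\mathbb{F}$ be right linearly independent over $K_i$; put $n=n_1+\dots+n_\ell$. For $k\in\{1,\dots,n\}$ let $\mathcal{C}_{L,k}\subseteq\mathbb{F}^n$ be the linearized Reed-Solomon code consisting of all vectors $(\mathbf{c}^{(1)},\dots,\mathbf{c}^{(\ell)})$, $\mathbf{c}^{(i)}\in\mathbb{F}^{n_i}$, with $c^{(i)}_j=\sum_{l=0}^{k-1}F_l\,\mathcal{D}^l_{a^{(i)}}(\beta^{(i)}_j)$ for some $F_0,\dots,F_{k-1}\in\mathbb{F}$. Then $\mathcal{C}_{L,k}$ is a $k$-dimensional left linear code with $\mathrm{d_{SR}}(\mathcal{C}_{L,k})=n-k+1$, where $\mathrm{d_{SR}}$ is the sum-rank distance with lengths $(n_1,\dots,n_\ell)$ and division subrings $(K_1,\dots,K_\ell)$; i.e. it is a maximum sum-rank distance code.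
   Context: $\mathbb{F}$ is a division ring, $\sigma$ a ring endomorphism of $\mathbb{F}$, $\delta$ a $\sigma$-derivation ($\delta$ additive, $\delta(ab)=\sigma(a)\delta(b)+\delta(a)b$). For $a\in\mathbb{F}$, $\mathcal{D}_a(b)=\sigma(b)a+\delta(b)$, $\mathcal{D}_a^l$ is its $l$-fold composition ($\mathcal{D}_a^0=\mathrm{Id}$), $K_a=\{b\in\mathbb{F}:\mathcal{D}_a(b)=ab\}$ (a division subring), and $a,c$ are conjugate if $c=\mathcal{D}_a(b)b^{-1}$ for some $b\in\mathbb{F}^*$. Sum-rank weight: $\mathrm{wt_{SR}}(\mathbf{c})=\sum_i\dim_{K_i}\langle c^{(i)}_1,\dots,c^{(i)}_{n_i}\rangle^R_{K_i}$ (right $K_i$-spans), $\mathrm{d_{SR}}(\mathbf{c},\mathbf{d})=\mathrm{wt_{SR}}(\mathbf{c}-\mathbf{d})$, and $\mathrm{d_{SR}}(\mathcal{C})$ is the minimum over distinct codewords. *)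

(* Defs.v *)
From HB Require Import structures.
From mathcomp Require Import all_boot all_order all_algebra.
From Stdlib Require Import ClassicalEpsilon.
Set Implicit Arguments. Unset Strict Implicit. Unset Printing Implicit Defensive.
Import Order.TTheory GRing.Theory Num.Theory.
Local Open Scope ring_scope.

Definition pb (P : Prop) : bool :=
  if excluded_middle_informative P then true else false.

Lemma pbP (P : Prop) : pb P = true <-> P.
Proof. by rewrite /pb; case: excluded_middle_informative. Qed.

Lemma pb_ex (P : nat -> Prop) : (exists n, P n) -> exists n, pb (P n).
Proof. by case=> n Hn; exists n; apply/pbP. Qed.

(* The least natural number satisfying P (0 if none exists). *)
Definition minnat (P : nat -> Prop) : nat :=
  match excluded_middle_informative (exists n, P n) with
  | left H => @ex_minn (fun n => pb (P n)) (pb_ex H)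
  | right _ => 0%N
  end.

Definition division_ring (F : unitRingType) : Prop :=
  forall x : F, x != 0 -> x \is a GRing.unit.

Definition sigma_derivation (F : unitRingType) (sigma : {rmorphism F -> F})
  (delta : {additive F -> F}) : Prop :=
  forall a b : F, delta (a * b) = sigma a * delta b + delta a * b.

Section Ops.
Variables (F : unitRingType) (sigma : F -> F) (delta : F -> F).

Definition Dop (a b : F) : F := sigma b * a + delta b.

Definition Dpow (a : F) (l : nat) (b : F) : F := iter l (Dop a) b.

Definition Kset (a : F) : pred F := fun b => Dop a b == a * b.

Definition conjugate (a c : F) : Prop :=
  exists b : F, b != 0 /\ c = Dop a b * b^-1.
End Ops.

Section SumRank.
Variable F : unitRingType.

Definition in_rspan (K : pred F) (m : nat) (e : 'I_m -> F) (x : F) : Prop :=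
  exists lam : 'I_m -> F, (forall t, K (lam t)) /\ x = \sum_(t < m) e t * lam t.

(* dim_K <c_1,...,c_m>^R_K : the least number of vectors whose right K-span
   contains all c_j (= the dimension of the right K-span of the c_j). *)
Definition rdim (K : pred F) (m : nat) (c : 'I_m -> F) : nat :=
  minnat (fun r => exists e : 'I_r -> F, forall j, in_rspan K e (c j)).

Definition bvec (ell : nat) (nn : 'I_ell -> nat) : Type :=
  forall i : 'I_ell, 'I_(nn i) -> F.

Definition bsub (ell : nat) (nn : 'I_ell -> nat) (x y : bvec nn) : bvec nn := fun i j => x i j - y i j.
Definition badd (ell : nat) (nn : 'I_ell -> nat) (x y : bvec nn) : bvec nn := fun i j => x i j + y i j.
Definition bscale (ell : nat) (nn : 'I_ell -> nat) (c : F) (x : bvec nn) : bvec nn := fun i j => c * x i j.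
Definition bzero (ell : nat) (nn : 'I_ell -> nat) : bvec nn := fun i j => 0.

Definition wtSR (ell : nat) (nn : 'I_ell -> nat) (K : 'I_ell -> pred F) (x : bvec nn) : nat :=
  (\sum_(i < ell) rdim (K i) (x i))%N.

Definition dSR (ell : nat) (nn : 'I_ell -> nat) (K : 'I_ell -> pred F) (x y : bvec nn) : nat :=
  wtSR K (bsub x y).

Definition dSR_code (ell : nat) (nn : 'I_ell -> nat) (K : 'I_ell -> pred F) (C : bvec nn -> Prop) : nat :=
  minnat (fun d => exists x y, C x /\ C y /\ x <> y /\ dSR K x y = d).

Definition left_linear (ell : nat) (nn : 'I_ell -> nat) (C : bvec nn -> Prop) : Prop :=
  C (@bzero ell nn) /\ (forall x y, C x -> C y -> C (badd x y)) /\
  (forall c x, C x -> C (bscale c x)).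

Definition left_dim (ell : nat) (nn : 'I_ell -> nat) (C : bvec nn -> Prop) (k : nat) : Prop :=
  exists g : 'I_k -> bvec nn,
    (forall t, C (g t)) /\
    (forall lam : 'I_k -> F,
        (forall i j, \sum_(t < k) lam t * g t i j = 0) -> forall t, lam t = 0) /\
    (forall x, C x -> exists lam : 'I_k -> F,
        forall i j, x i j = \sum_(t < k) lam t * g t i j).
End SumRank.

Definition LRS_code (F : unitRingType) (sigma delta : F -> F) (ell : nat)
  (nn : 'I_ell -> nat) (a : 'I_ell -> F) (beta : forall i, 'I_(nn i) -> F)
  (k : nat) : bvec F nn -> Prop :=
  fun x => exists Fc : 'I_k -> F, forall i j,
    x i j = \sum_(l < k) Fc l * Dpow sigma delta (a i) l (beta i j).

(* Main.v *)
Require Import Defs.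
From HB Require Import structures.
From mathcomp Require Import all_boot all_order all_algebra.
From Stdlib Require Import ClassicalEpsilon FunctionalExtensionality.
From mathcomp Require Import zify.
Import GRing.Theory.
Local Open Scope ring_scope.
Set Implicit Arguments. Unset Strict Implicit. Unset Printing Implicit Defensive.

Section LRS.
Variables (F : unitRingType) (sigma : {rmorphism F -> F}) (delta : {additive F -> F}).
Hypothesis divF : division_ring F.
Hypothesis sder : sigma_derivation sigma delta.

Local Notation D a := (Dop sigma delta a).
Local Notation Dp a l := (Dpow sigma delta a l).
Local Notation K a := (Kset sigma delta a).

Lemma DD a x y : D a (x + y) = D a x + D a y.
Proof. by rewrite /Dop rmorphD raddfD mulrDl addrACA. Qed.
Lemma D0 a : D a 0 = 0.
Proof. by rewrite /Dop rmorph0 raddf0 mul0r addr0. Qed.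
Lemma DN a x : D a (- x) = - D a x.
Proof. by rewrite /Dop rmorphN raddfN mulNr opprD. Qed.
Lemma DB a x y : D a (x - y) = D a x - D a y.
Proof. by rewrite DD DN. Qed.
Lemma Dsum a I (r : seq I) (P : pred I) (E : I -> F) :
  D a (\sum_(i <- r | P i) E i) = \sum_(i <- r | P i) D a (E i).
Proof.
elim/big_rec2: _ => [|i y1 y2 _ <-]; first exact: D0.
by rewrite DD.
Qed.
Lemma DM a b x : D a (b * x) = sigma b * D a x + delta b * x.
Proof. by rewrite /Dop rmorphM sder mulrDr !mulrA addrA. Qed.
Lemma DK a x l : K a l -> D a (x * l) = D a x * l.
Proof.
move/eqP=> Hl; rewrite /Dop rmorphM sder mulrDl -mulrA addrA -mulrDr.
by rewrite -[sigma l * a + _]/(Dop sigma delta a l) Hl mulrA.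
Qed.

Lemma DpS a l x : Dp a l.+1 x = D a (Dp a l x).
Proof. by rewrite /Dpow iterS. Qed.
Lemma DpSr a l x : Dp a l.+1 x = Dp a l (D a x).
Proof. by rewrite /Dpow iterSr. Qed.
Lemma DpD a l x y : Dp a l (x + y) = Dp a l x + Dp a l y.
Proof. by elim: l => [//|l IH]; rewrite !DpS IH DD. Qed.
Lemma Dp0 a l : Dp a l 0 = 0.
Proof. by elim: l => [//|l IH]; rewrite DpS IH D0. Qed.
Lemma DpN a l x : Dp a l (- x) = - Dp a l x.
Proof. by elim: l => [//|l IH]; rewrite !DpS IH DN. Qed.
Lemma DpB a l x y : Dp a l (x - y) = Dp a l x - Dp a l y.
Proof. by rewrite DpD DpN. Qed.
Lemma Dpsum a l I (r : seq I) (P : pred I) (E : I -> F) :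
  Dp a l (\sum_(i <- r | P i) E i) = \sum_(i <- r | P i) Dp a l (E i).
Proof.
elim/big_rec2: _ => [|i y1 y2 _ <-]; first exact: Dp0.
by rewrite DpD.
Qed.
Lemma DpK a l x m : K a m -> Dp a l (x * m) = Dp a l x * m.
Proof. by move=> Hm; elim: l => [//|l IH]; rewrite !DpS IH DK. Qed.

Lemma delta1 : delta 1 = 0.
Proof.
have := sder 1 1; rewrite mul1r rmorph1 mul1r mulr1 => H.
by apply: (@addrI _ (delta 1)); rewrite addr0 -H.
Qed.
Lemma D1 a : D a 1 = a.
Proof. by rewrite /Dop rmorph1 mul1r delta1 addr0. Qed.

Lemma unitF (x : F) : x != 0 -> x \is a GRing.unit.
Proof. exact: divF. Qed.

Lemma sigma_neq0 x : x != 0 -> sigma x != 0.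
Proof.
move=> x0; apply/eqP=> sx0.
have := rmorphM sigma x x^-1; rewrite mulrV ?unitF // rmorph1 sx0 mul0r.
by move/eqP; rewrite oner_eq0.
Qed.

Lemma K0 a : K a 0.
Proof. by rewrite /Kset D0 mulr0. Qed.
Lemma K1 a : K a 1.
Proof. by rewrite /Kset D1 mulr1. Qed.
Lemma KD a x y : K a x -> K a y -> K a (x + y).
Proof. by rewrite /Kset DD mulrDr => /eqP-> /eqP->. Qed.
Lemma KN a x : K a x -> K a (- x).
Proof. by rewrite /Kset DN mulrN => /eqP->. Qed.
Lemma KB a x y : K a x -> K a y -> K a (x - y).
Proof. by move=> ? ?; apply: KD => //; apply: KN. Qed.
Lemma KM a x y : K a x -> K a y -> K a (x * y).
Proof. by move=> Hx Hy; rewrite /Kset DK // (eqP Hx) mulrA. Qed.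
Lemma KV a x : K a x -> K a x^-1.
Proof.
have [->|x0] := eqVneq x 0; first by rewrite invr0.
move=> Hx; rewrite /Kset; apply/eqP.
have Ux := unitF x0.
have E1 : D a (x * x^-1) = a by rewrite mulrV // D1.
rewrite DM in E1.
have Hd : delta x = a * x - sigma x * a.
  by move/eqP: Hx => Hx; rewrite -Hx /Dop [sigma x * a + _]addrC addrK.
rewrite Hd mulrBl -mulrA mulrV // mulr1 in E1.
have Eu : sigma x * D a x^-1 = a - (a - sigma x * a * x^-1) by rewrite -[X in _ = X - _]E1 addrK.
rewrite opprB addrC subrK -mulrA in Eu.
move/(congr1 (fun z => (sigma x)^-1 * z)): Eu; rewrite !mulrA mulVr ?unitF ?sigma_neq0 //.
by rewrite !mul1r.
Qed.
Lemma Ksum a I (r : seq I) (P : pred I) (E : I -> F) :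
  (forall i, P i -> K a (E i)) -> K a (\sum_(i <- r | P i) E i).
Proof.
move=> H; elim/big_rec: _ => [|i y Pi Hy]; first exact: K0.
by apply: KD => //; apply: H.
Qed.


Lemma nz_mul (x y : F) : x != 0 -> y != 0 -> x * y != 0.
Proof.
move=> x0 y0; apply/eqP=> xy0.
have : x * y * y^-1 = 0 by rewrite xy0 mul0r.
by rewrite -mulrA mulrV ?unitF // mulr1; apply/eqP.
Qed.

Lemma conj_comp a b d : b != 0 -> D a (d * b) = D (D a b * b^-1) d * b.
Proof.
move=> b0; rewrite DM /Dop mulrDl -!mulrA mulVr ?unitF // mulr1.
by rewrite -/(Dop sigma delta a b).
Qed.

Lemma conj_trans a c e : conjugate sigma delta a c -> conjugate sigma delta c e ->
  conjugate sigma delta a e.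
Proof.
move=> [b [b0 ->]] [d [d0 ->]]; exists (d * b); split; first exact: nz_mul.
rewrite conj_comp // invrM ?unitF // !mulrA -[_ * b * b^-1]mulrA mulrV ?unitF //.
by rewrite mulr1.
Qed.

Lemma conj_sym a c : conjugate sigma delta a c -> conjugate sigma delta c a.
Proof.
move=> [b [b0 ->]]; exists b^-1; split; first by rewrite invr_eq0.
rewrite invrK -conj_comp // mulVr ?unitF // D1 //.
Qed.

Lemma ker_lemma a g b : g != 0 -> D a b = (D a g * g^-1) * b ->
  exists2 nu, K a nu & b = g * nu.
Proof.
move=> g0 Hb; set nu := g^-1 * b.
have Eb : b = g * nu by rewrite /nu mulVKr ?unitF.
exists nu => //.
rewrite Eb DM -mulrA mulKr ?unitF // [Dop _ _ _ g]/Dop mulrDl in Hb.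
move/addIr: Hb => Hs.
rewrite /Kset; apply/eqP.
have := congr1 (fun z => (sigma g)^-1 * z) Hs.
by rewrite !mulrA mulVr ?unitF ?sigma_neq0 // !mul1r.
Qed.

Definition act a N (p : nat -> F) x := \sum_(l < N) p l * Dp a l x.

Lemma act_eq a N p q x : (forall l, (l < N)%N -> p l = q l) -> act a N p x = act a N q x.
Proof. by move=> H; apply: eq_bigr => i _; rewrite H. Qed.

Lemma act_ext a N M p x : (forall l, (N <= l)%N -> p l = 0) -> (N <= M)%N ->
  act a M p x = act a N p x.
Proof.
move=> Hp NM; rewrite /act (big_ord_widen _ (fun l => p l * Dp a l x) NM) big_mkcond /=.
rewrite [RHS]big_mkcond /=; apply: eq_bigr => i _; case: ifP => // /negbT; rewrite -leqNgt => /Hp ->.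
by rewrite mul0r.
Qed.

Lemma act_add a N p q x : act a N (fun l => p l + q l) x = act a N p x + act a N q x.
Proof. by rewrite /act -big_split; apply: eq_bigr => i _; rewrite mulrDl. Qed.
Lemma act_scal a N h p x : act a N (fun l => h * p l) x = h * act a N p x.
Proof. by rewrite /act mulr_sumr; apply: eq_bigr => i _; rewrite mulrA. Qed.
Lemma act_xD a N p x y : act a N p (x + y) = act a N p x + act a N p y.
Proof. by rewrite /act -big_split; apply: eq_bigr => i _; rewrite DpD mulrDr. Qed.
Lemma act_xN a N p x : act a N p (- x) = - act a N p x.
Proof. by rewrite /act -sumrN; apply: eq_bigr => i _; rewrite DpN mulrN. Qed.
Lemma act_xB a N p x y : act a N p (x - y) = act a N p x - act a N p y.
Proof. by rewrite act_xD act_xN. Qed.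
Lemma act_x0 a N p : act a N p 0 = 0.
Proof. by rewrite /act big1 // => i _; rewrite Dp0 mulr0. Qed.
Lemma act_xK a N p x m : K a m -> act a N p (x * m) = act a N p x * m.
Proof. by move=> Hm; rewrite /act mulr_suml; apply: eq_bigr => i _; rewrite DpK // mulrA. Qed.
Lemma act_xsum a N p I (r : seq I) (P : pred I) (E : I -> F) :
  act a N p (\sum_(i <- r | P i) E i) = \sum_(i <- r | P i) act a N p (E i).
Proof.
elim/big_rec2: _ => [|i y1 y2 _ <-]; first exact: act_x0.
by rewrite act_xD.
Qed.

Definition lx (p : nat -> F) (j : nat) : F :=
  (if j is j'.+1 then sigma (p j') else 0) + delta (p j).

Lemma act_lx a N p x : (forall l, (N <= l)%N -> p l = 0) ->
  act a N.+1 (lx p) x = D a (act a N p x).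
Proof.
move=> Hp; rewrite /act Dsum.
rewrite (eq_bigr (fun j : 'I_N.+1 => (if (j : nat) is j'.+1 then sigma (p j') else 0) * Dp a j x
   + delta (p j) * Dp a j x)); last by move=> i _; rewrite /lx mulrDl.
rewrite big_split /= big_ord_recl big_ord_recr /= mul0r add0r Hp // raddf0 mul0r addr0.
rewrite -big_split /=; apply: eq_bigr => i _; by rewrite DM.
Qed.

Lemma lx_supp N p : (forall l, (N <= l)%N -> p l = 0) -> forall l, (N.+1 <= l)%N -> lx p l = 0.
Proof.
move=> Hp [//|l] Hl; rewrite /lx !Hp ?rmorph0 ?raddf0 ?addr0 //.
exact: ltnW.
Qed.

Definition constc (c : F) (j : nat) : F := if j == 0%N then c else 0.
Definition xpc c d := iter d lx (constc c).

Lemma xpc_supp c d l : (d.+1 <= l)%N -> xpc c d l = 0.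
Proof.
elim: d l => [|d IH] l Hl; first by rewrite /xpc /= /constc; case: l Hl.
by rewrite /xpc iterS; apply: (lx_supp IH).
Qed.

Lemma act_xpc a c d x : act a d.+1 (xpc c d) x = Dp a d (c * x).
Proof.
elim: d => [|d IH]; first by rewrite /act big_ord1 /xpc /= /constc /=.
rewrite /xpc iterS act_lx; last exact: xpc_supp.
by rewrite IH DpS.
Qed.

Lemma division c d p : (forall l, (d.+1 <= l)%N -> p l = 0) ->
  exists q, exists r, (forall l, (d <= l)%N -> q l = 0) /\
   (forall a x, act a d.+1 p x = act a d q (D a x - c * x) + r * x) /\
   ((forall l, q l = 0) -> r = 0 -> forall l, p l = 0).
Proof.
elim: d p => [|d IH] p Hp.
  exists (fun _ => 0), (p 0%N); split => //; split.
    by move=> a x; rewrite /act big_ord1 big_ord0 add0r.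
  by move=> _ r0 [|l] //; rewrite Hp.
pose h := p d.+1.
pose p'' l := (if l == d.+1 then 0 else p l) + h * xpc c d l.
have Hp'' : forall l, (d.+1 <= l)%N -> p'' l = 0.
  move=> l Hl; rewrite /p'' xpc_supp // mulr0 addr0; case: eqP => // /eqP ne.
  by apply: Hp; rewrite ltn_neqAle eq_sym ne Hl.
have [q'' [r'' [Hq'' [Ha'' Hz'']]]] := IH p'' Hp''.
exists (fun l => q'' l + (if l == d then h else 0)), r''; split; [|split].
- move=> l Hl; rewrite Hq'' ?(ltnW Hl) // (gtn_eqF Hl) addr0 //.
- move=> a x.
  rewrite act_add (act_ext _ _ Hq'' (leqnSn d)).
  have E1 : forall y, act a d.+1 (fun l => if l == d then h else 0) y = h * Dp a d y.
    move=> y; rewrite /act big_ord_recr /= eqxx big1 ?add0r // => i _.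
    by rewrite (ltn_eqF (ltn_ord i)) mul0r.
  have E2 : act a d.+2 p x = act a d.+1 p x + h * Dp a d.+1 x by rewrite /act big_ord_recr.
  have Ep : act a d.+1 p'' x = act a d.+1 p x + h * Dp a d (c * x).
    rewrite /p'' act_add act_scal act_xpc; congr (_ + _); apply: act_eq => l Hl.
    by rewrite (ltn_eqF Hl).
  have E3 : Dp a d.+1 x = Dp a d (D a x - c * x) + Dp a d (c * x) by rewrite DpSr -DpD subrK.
  have HAC := Ha'' a x; rewrite Ep in HAC.
  rewrite E1 E2 E3 mulrDr addrCA HAC addrCA addrA //.
- move=> Hq r0 l.
  have h0 : h = 0 by have := Hq d; rewrite Hq'' // eqxx add0r.
  have Hq0 : forall l, q'' l = 0.
    by move=> l'; have := Hq l'; case: eqP => [->|_]; rewrite ?h0 addr0.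
  have := Hz'' Hq0 r0 l; rewrite /p'' h0 mul0r addr0.
  by case: eqP => [-> _|_ //]; exact: h0.
Qed.

Lemma SD a r n (M : nat -> nat -> F) : (r < n)%N -> (forall j t, K a (M j t)) ->
  exists lam : nat -> F, (forall j, K a (lam j)) /\ (exists2 j, (j < n)%N & lam j != 0) /\
    (forall t, (t < r)%N -> \sum_(j < n) M j t * lam j = 0).
Proof.
elim: r n M => [|r IH] n M Hrn HM.
  exists (fun j => if j == 0%N then 1 else 0); split; last split => //.
    by move=> j; case: eqP => _; [apply: K1 | apply: K0].
  by exists 0%N => //; rewrite eqxx oner_neq0.
case: (boolP [exists j : 'I_n, M j r != 0]).
- case/existsP => j0 Hj0.
  pose u := (M j0 r)^-1.
  pose M' j t := M (bump j0 j) t - M j0 t * u * M (bump j0 j) r.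
  have HM' : forall j t, K a (M' j t).
    by move=> j t; rewrite /M'; apply: KB => //; apply: KM => //; apply: KM => //; apply: KV.
  have Hrn' : (r < n.-1)%N by case: n Hrn {j0 Hj0 u M' HM'} => //.
  have [lam' [Hl'K [[j' Hj' Hl'0] Hl'eq]]] := IH n.-1 M' Hrn' HM'.
  pose S := \sum_(i < n.-1) M (bump j0 i) r * lam' i.
  exists (fun j => if j == (j0 : nat) then - (u * S) else lam' (unbump j0 j)).
  split; [|split].
  + move=> j; case: eqP => _ //; apply: KN; apply: KM; first exact: KV.
    by apply: Ksum => i _; apply: KM.
  + exists (bump j0 j').
      have := ltn_ord (lift j0 (Ordinal Hj')); by [].
    by rewrite [bump _ _ == _]eq_sym (negbTE (neq_bump _ _)) bumpK.
  + move=> t Ht.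
    rewrite (bigD1_ord j0) //= eqxx.
    rewrite (eq_bigr (fun i : 'I_n.-1 => M (bump j0 i) t * lam' i)); last first.
      by move=> i _ /=; rewrite [bump _ _ == _]eq_sym (negbTE (neq_bump _ _)) bumpK.
    have Uj : M j0 r \is a GRing.unit by apply: unitF.
    move: Ht; rewrite ltnS leq_eqVlt => /orP [/eqP ->|tr].
      by rewrite mulrN mulrA mulrV // mul1r addNr.
    have := Hl'eq t tr; rewrite /M'.
    rewrite (eq_bigr (fun i : 'I_n.-1 => M (bump j0 i) t * lam' i -
       M j0 t * u * (M (bump j0 i) r * lam' i))); last first.
      by move=> i _; rewrite mulrBl !mulrA.
    rewrite sumrB -mulr_sumr -/S => H.
    by rewrite mulrN mulrA addrC.
- rewrite negb_exists => /forallP Hall.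
  have [lam [HK [Hnz Heq]]] := IH n M (ltnW Hrn) HM.
  exists lam; split => //; split => // t Ht.
  move: Ht; rewrite ltnS leq_eqVlt => /orP [/eqP ->|tr]; last exact: Heq.
  by rewrite big1 // => j _; have := Hall j; rewrite negbK => /eqP ->; rewrite mul0r.
Qed.

Definition indep (Kp : pred F) n (b : nat -> F) := forall lam : nat -> F,
  (forall j, (j < n)%N -> Kp (lam j)) -> \sum_(j < n) b j * lam j = 0 ->
  forall j, (j < n)%N -> lam j = 0.

Definition in_span (Kp : pred F) r (e : nat -> F) x :=
  exists mu : nat -> F, (forall t, Kp (mu t)) /\ x = \sum_(t < r) e t * mu t.

Lemma fchoice (P : nat -> (nat -> F) -> Prop) :
  (forall j, exists mu, P j mu) -> exists Mf : nat -> nat -> F, forall j, P j (Mf j).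
Proof.
move=> H; exists (fun j => proj1_sig (constructive_indefinite_description _ (H j))).
by move=> j; exact: proj2_sig (constructive_indefinite_description _ (H j)).
Qed.

Lemma phi_sum a c n (b mu : nat -> F) : (forall j, (j < n)%N -> K a (mu j)) ->
  \sum_(j < n) (D a (b j) - c * b j) * mu j =
  D a (\sum_(j < n) b j * mu j) - c * \sum_(j < n) b j * mu j.
Proof.
move=> Hmu; rewrite Dsum mulr_sumr -sumrB; apply: eq_bigr => j _.
by rewrite DK ?mulrBl ?mulrA //; apply: Hmu.
Qed.

Lemma act_lin a N p n (b mu : nat -> F) : (forall j, (j < n)%N -> K a (mu j)) ->
  act a N p (\sum_(j < n) b j * mu j) = \sum_(j < n) act a N p (b j) * mu j.
Proof.
move=> Hmu; rewrite act_xsum; apply: eq_bigr => j _; rewrite act_xK //; exact: Hmu.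
Qed.

Lemma unit_cancel (x y : F) : x != 0 -> x * y = 0 -> y = 0.
Proof.
move=> x0 H; have := congr1 (fun z => x^-1 * z) H.
by rewrite mulKr ?unitF // mulr0.
Qed.
Lemma unit_cancelr (x y : F) : x != 0 -> y * x = 0 -> y = 0.
Proof.
move=> x0 H; have := congr1 (fun z => z * x^-1) H.
by rewrite mulrK ?unitF // mul0r.
Qed.

Lemma bump_lt j0 j n : (j0 < n)%N -> (j < n.-1)%N -> (bump j0 j < n)%N.
Proof. by rewrite /bump; case: (j0 <= j)%N => /=; lia. Qed.

Lemma unbump_lt j0 j n : (j0 < n)%N -> (j < n)%N -> j != j0 -> (unbump j0 j < n.-1)%N.
Proof. by rewrite /unbump; case: ltnP => /= H1 H2 H3 /eqP H4; lia. Qed.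

Lemma Qlem ell (a : 'I_ell -> F)
  (nonconj : forall i j : 'I_ell, i != j -> ~ conjugate sigma delta (a i) (a j)) k :
  forall (n_ r_ : 'I_ell -> nat) (b e : 'I_ell -> nat -> F) (p : nat -> F),
  (forall i, indep (K (a i)) (n_ i) (b i)) ->
  (forall l, (k <= l)%N -> p l = 0) ->
  (forall i j, (j < n_ i)%N -> in_span (K (a i)) (r_ i) (e i) (act (a i) k p (b i j))) ->
  (k <= \sum_(i < ell) (n_ i - r_ i))%N ->
  forall l, p l = 0.
Proof.
elim: k => [|k IH] n_ r_ b e p Hind Hp Hspan Hcnt.
  by move=> l; apply: Hp.
have [i0 Hi0] : exists i0, (r_ i0 < n_ i0)%N.
  case: (boolP [exists i, (r_ i < n_ i)%N]) => [/existsP [i Hi]|]; first by exists i.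
  rewrite negb_exists => /forallP Hall; exfalso.
  move: Hcnt; rewrite big1 // => i _; apply/eqP; rewrite subn_eq0 leqNgt; exact: Hall.
set n0 := n_ i0.
have HP : forall j, exists mu : nat -> F, (j < n0)%N -> (forall t, K (a i0) (mu t)) /\
      act (a i0) k.+1 p (b i0 j) = \sum_(t < r_ i0) e i0 t * mu t.
  move=> j; case: (ltnP j n0) => Hj; last by exists (fun _ => 0) => H; exfalso; lia.
  by have [mu Hmu] := Hspan i0 j Hj; exists mu.
have [Mf HMf] := fchoice HP.
pose M j t := if (j < n0)%N then Mf j t else 0.
have HM : forall j t, K (a i0) (M j t).
  move=> j t; rewrite /M; case: ifP => Hj; last exact: K0.
  by have [HK _] := HMf j Hj; apply: HK.
have [lam [HlK [[j0 Hj0 Hl0] Hleq]]] := SD Hi0 HM.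
pose g := \sum_(j < n0) b i0 j * lam j.
have g0 : g != 0.
  apply/eqP=> g0; move/eqP: Hl0; apply.
  exact: (Hind i0 lam (fun j _ => HlK j) g0 j0 Hj0).
have pg : act (a i0) k.+1 p g = 0.
  rewrite /g act_lin; last by move=> j _; apply: HlK.
  rewrite (eq_bigr (fun j : 'I_n0 => \sum_(t < r_ i0) e i0 t * (M j t * lam j))); last first.
    move=> j _; have [_ ->] := HMf j (ltn_ord j); rewrite mulr_suml /M (ltn_ord j).
    by apply: eq_bigr => t _; rewrite mulrA.
  rewrite exchange_big big1 // => t _.
  by rewrite -mulr_sumr Hleq // mulr0.
pose c := D (a i0) g * g^-1.
have [q [r [Hq [Hact Hz]]]] := division c Hp.
have r0 : r = 0.
  have := Hact (a i0) g; rewrite pg.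
  have -> : D (a i0) g - c * g = 0 by rewrite /c mulrVK ?unitF // subrr.
  rewrite act_x0 add0r => /esym; exact: unit_cancelr.
pose phi i x := D (a i) x - c * x.
pose n' i := if i == i0 then (n_ i).-1 else n_ i.
pose b' i j := if i == i0 then phi i (b i (bump j0 j)) else phi i (b i j).
have key : forall i x, act (a i) k q (phi i x) = act (a i) k.+1 p x.
  by move=> i x; rewrite Hact r0 mul0r addr0.
apply: (Hz _ r0); apply: (IH n' r_ b' e q) => //.
- move=> i; case: (eqVneq i i0) => [->|ne] lam2 HK2 Hsum j Hj.
  + rewrite /n' /b' eqxx /phi in Hsum Hj HK2.
    rewrite (@phi_sum (a i0) c _ (fun j => b i0 (bump j0 j))) // in Hsum.
    set y := \sum_(j < _) _ in Hsum.
    move/eqP: Hsum; rewrite subr_eq0 => /eqP Hy.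
    have [nu Knu Eyn] := ker_lemma g0 Hy.
    pose lam3 j := lam j * nu - (if j == j0 then 0 else lam2 (unbump j0 j)).
    have Hs3 : \sum_(j < n0) b i0 j * lam3 j = 0.
      rewrite /lam3 (eq_bigr (fun j : 'I_n0 => b i0 j * lam j * nu -
          b i0 j * (if (j : nat) == j0 then 0 else lam2 (unbump j0 j)))); last first.
        by move=> j' _; rewrite mulrBr mulrA.
      rewrite sumrB -mulr_suml -/g -Eyn (bigD1_ord (Ordinal Hj0)) //= eqxx mulr0 add0r.
      apply/eqP; rewrite subr_eq0; apply/eqP; apply: eq_bigr => i1 _ /=.
      by rewrite [bump _ _ == _]eq_sym (negbTE (neq_bump _ _)) bumpK.
    have H3 := Hind i0 lam3.
    have HK3 : forall j, (j < n0)%N -> K (a i0) (lam3 j).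
      move=> j' Hj'; rewrite /lam3; apply: KB; first by apply: KM.
      case: eqP => [_|/eqP ne]; first exact: K0.
      by apply: HK2; apply: unbump_lt.
    have nu0 : nu = 0.
      have := H3 HK3 Hs3 j0 Hj0; rewrite /lam3 eqxx subr0.
      exact: unit_cancel.
    have := H3 HK3 Hs3 (bump j0 j) (bump_lt Hj0 Hj).
    rewrite /lam3 nu0 mulr0 sub0r [bump _ _ == _]eq_sym (negbTE (neq_bump _ _)) bumpK.
    by move/eqP; rewrite oppr_eq0 => /eqP.
  + rewrite /n' /b' (negbTE ne) /phi in Hsum Hj HK2.
    rewrite (@phi_sum (a i) c _ (b i)) // in Hsum.
    set y := \sum_(j < _) _ in Hsum.
    move/eqP: Hsum; rewrite subr_eq0 => /eqP Hy.
    have y0 : y = 0.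
      apply/eqP; apply/negP => /negP y0; apply: (nonconj i0 i); first by rewrite eq_sym.
      apply: (@conj_trans _ c); first by exists g.
      apply: conj_sym; exists y; split => //.
      by rewrite Hy mulrK ?unitF.
    exact: (Hind i lam2 HK2 y0).
- move=> i j; case: (eqVneq i i0) => [->|ne]; rewrite /b' /n' ?eqxx ?(negbTE ne) => Hj;
    rewrite key; apply: Hspan => //.
  exact: bump_lt.
- rewrite (bigD1 i0) //= in Hcnt; rewrite (bigD1 i0) //= /n' eqxx.
  rewrite (eq_bigr (fun i => (n_ i - r_ i)%N)); last by move=> i /negbTE ->.
  lia.
Qed.

Lemma act_sub a N p q x : act a N (fun l => p l - q l) x = act a N p x - act a N q x.
Proof. by rewrite /act -sumrB; apply: eq_bigr => i _; rewrite mulrBl. Qed.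

Lemma Gexists (s : seq (F * F)) : exists G : nat -> F,
  (forall l, ((size s).+1 <= l)%N -> G l = 0) /\ G (size s) = 1 /\
  (forall y, y \in s -> act y.1 (size s).+1 G y.2 = 0).
Proof.
elim: s => [|x s [G [HG [H1 Hz]]]].
  exists (constc 1); split; first by case.
  by split.
pose v := act x.1 (size s).+1 G x.2.
pose d := D x.1 v * v^-1.
exists (fun l => lx G l - d * G l); split; [|split].
- move=> l Hl /=; rewrite (lx_supp HG) // HG; first by rewrite mulr0 subr0.
  by apply: ltnW.
- rewrite /= /lx H1 HG // rmorph1 raddf0 addr0 mulr0 subr0 //.
- have HG' : forall l, ((size s).+1 <= l)%N -> G l = 0 := HG.
  move=> y; rewrite inE => /orP [/eqP ->|ys] /=.
  + rewrite act_sub act_scal act_lx // (act_ext _ _ HG' (leqnSn _)) -/v.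
    have [->|v0] := eqVneq v 0; first by rewrite D0 mulr0 subr0.
    by rewrite /d mulrVK ?unitF // subrr.
  + rewrite act_sub act_scal act_lx // (act_ext _ _ HG' (leqnSn _)) Hz // D0 mulr0 subr0 //.
Qed.

Lemma minnatP (P : nat -> Prop) : (exists n, P n) ->
  P (minnat P) /\ forall m, P m -> (minnat P <= m)%N.
Proof.
move=> Hex; rewrite /minnat; case: excluded_middle_informative => [H|//].
case: ex_minnP => m /pbP Pm Hmin; split => // m' Pm'; apply: Hmin; exact/pbP.
Qed.

Lemma rdim_ex (Kp : pred F) m (c : 'I_m -> F) : Kp 0 -> Kp 1 ->
  exists r, exists e : 'I_r -> F, forall j, in_rspan Kp e (c j).
Proof.
move=> K0' K1'; exists m, c => j.
exists (fun t => if t == j then 1 else 0); split; first by move=> t; case: eqP.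
rewrite (bigD1 j) //= eqxx mulr1 big1 ?addr0 // => t /negbTE ->; exact: mulr0.
Qed.

Lemma rdim0 (Kp : pred F) m (c : 'I_m -> F) : Kp 0 -> Kp 1 ->
  (forall j, c j = 0) -> rdim Kp c = 0%N.
Proof.
move=> K0' K1' Hc; have [_ Hm] := minnatP (rdim_ex c K0' K1').
apply/eqP; rewrite -leqn0; apply: Hm.
exists (fun _ => 0) => j; exists (fun _ => 0); split => //.
by rewrite big_ord0 Hc.
Qed.

Lemma rdim_le (Kp : pred F) m (c : 'I_m -> F) z : Kp 0 -> Kp 1 ->
  (forall j : 'I_m, (j < z)%N -> c j = 0) -> (rdim Kp c <= m - z)%N.
Proof.
move=> K0' K1' Hc; have [_ Hm] := minnatP (rdim_ex c K0' K1'); apply: Hm.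
exists (fun t : 'I_(m - z) => oapp c 0 (insub (z + t)%N)) => j.
case: (ltnP j z) => Hj.
  exists (fun _ => 0); split => //; rewrite Hc // big1 // => t _; exact: mulr0.
have Ht0 : (j - z < m - z)%N by have := ltn_ord j; lia.
pose t0 := Ordinal Ht0.
exists (fun t => if t == t0 then 1 else 0); split; first by move=> t; case: eqP.
rewrite (bigD1 t0) //= eqxx mulr1 big1 ?addr0; last by move=> t /negbTE ->; exact: mulr0.
by rewrite subnKC // valK.
Qed.

Lemma zdistr ell (nn : 'I_ell -> nat) m : (m <= \sum_(i < ell) nn i)%N ->
  exists z : 'I_ell -> nat, (forall i, z i <= nn i)%N /\ (\sum_(i < ell) z i)%N = m.
Proof.
elim: ell nn m => [|ell IH] nn m Hm.
  exists (fun _ => 0%N); rewrite big_ord0 in Hm; split => //; rewrite big_ord0; lia.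
rewrite big_ord_recl in Hm.
pose z0 := minn (nn ord0) m.
have [z' [Hz1 Hz2]] := IH (fun i => nn (lift ord0 i)) (m - z0)%N ltac:(lia).
exists (fun i => if unlift ord0 i is Some i' then z' i' else z0); split.
  by move=> i; case: unliftP => [i' ->|->] //; apply: geq_minl.
rewrite big_ord_recl unlift_none (eq_bigr (fun i => z' i)); last by move=> i _; rewrite liftK.
rewrite Hz2; lia.
Qed.

Lemma size_flat (T : Type) (I : Type) (r : seq I) (f : I -> seq T) :
  size (flatten [seq f i | i <- r]) = (\sum_(i <- r) size (f i))%N.
Proof. by elim: r => [|i r IH]; rewrite ?big_nil // big_cons /= size_cat IH. Qed.

End LRS.

Theorem mainTheorem13 (F : unitRingType) (sigma : {rmorphism F -> F})
  (delta : {additive F -> F}) (ell : nat) (nn : 'I_ell -> nat)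
  (a : 'I_ell -> F) (beta : forall i : 'I_ell, 'I_(nn i) -> F) (k : nat) :
  division_ring F ->
  sigma_derivation sigma delta ->
  (forall i j : 'I_ell, i != j -> ~ conjugate sigma delta (a i) (a j)) ->
  (forall i : 'I_ell, forall lam : 'I_(nn i) -> F,
      (forall j, Kset sigma delta (a i) (lam j)) ->
      \sum_(j < nn i) beta i j * lam j = 0 -> forall j, lam j = 0) ->
  (1 <= k)%N -> (k <= \sum_(i < ell) nn i)%N ->
  let C := @LRS_code F sigma delta ell nn a beta k in
  [/\ left_linear C, left_dim C k &
      dSR_code (fun i => Kset sigma delta (a i)) C
        = ((\sum_(i < ell) nn i) - k + 1)%N].
Proof.
move=> divF sder nonconj Hind Hk1 Hkn C.
have K0' : forall i, Kset sigma delta (a i) 0 := fun i => K0 sigma delta (a i).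
have K1' : forall i, Kset sigma delta (a i) 1 by move=> i; apply: K1.
pose bn i j := oapp (beta i) 0 (insub j).
have bnE : forall i (j : 'I_(nn i)), bn i j = beta i j by move=> i j; rewrite /bn valK.
have LB : forall (x : bvec F nn) (Fc : 'I_k -> F),
    (forall i j, x i j = \sum_(l < k) Fc l * Dpow sigma delta (a i) l (beta i j)) ->
    (exists l, Fc l != 0) ->
    ((\sum_(i < ell) nn i) - k + 1 <= wtSR (fun i => Kset sigma delta (a i)) x)%N.
  move=> x Fc Hx [l0 Hl0].
  have HE : forall i, exists e : 'I_(rdim (Kset sigma delta (a i)) (x i)) -> F,
      forall j, in_rspan (Kset sigma delta (a i)) e (x i j).
    by move=> i; have [H _] := minnatP (rdim_ex (x i) (K0' i) (K1' i)); exact: H.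
  pose E i := proj1_sig (constructive_indefinite_description _ (HE i)).
  have HEs : forall i j, in_rspan (Kset sigma delta (a i)) (E i) (x i j).
    by move=> i; exact: (proj2_sig (constructive_indefinite_description _ (HE i))).
  pose r i := rdim (Kset sigma delta (a i)) (x i).
  pose e' i t := oapp (E i) 0 (insub t).
  pose pF l := oapp Fc 0 (insub l).
  have Hcnt : ~ (k <= \sum_(i < ell) (nn i - r i))%N.
    move=> Hc.
    suff : pF l0 = 0 by rewrite /pF valK => H; move/eqP: Hl0; apply.
    apply: (@Qlem F sigma delta divF sder ell a nonconj k nn r bn e' pF _ _ _ Hc).
    - move=> i lam HK Hs j Hj.
      have := Hind i (fun j => lam j) (fun j => HK j (ltn_ord j)) _ (Ordinal Hj); apply.
      by rewrite -[RHS]Hs; apply: eq_bigr => j' _; rewrite bnE.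
    - by move=> l Hl; rewrite /pF insubF //; apply/negbTE; rewrite -leqNgt.
    - move=> i j Hj.
      have [lam [HK Hl]] := HEs i (Ordinal Hj).
      exists (fun t => oapp lam 0 (insub t)); split.
        by move=> t; case: (insub t) => [t'|] /=; [apply: HK | apply: K0'].
      have -> : bn i j = beta i (Ordinal Hj) by rewrite -bnE.
      rewrite /act (eq_bigr (fun l : 'I_k => Fc l * Dpow sigma delta (a i) l (beta i (Ordinal Hj))));
        last by move=> l _; rewrite /pF valK.
      rewrite -Hx Hl; apply: eq_bigr => t _; by rewrite /e' valK.
  have Hsum : (\sum_(i < ell) nn i <= \sum_(i < ell) (nn i - r i) +
                wtSR (fun i => Kset sigma delta (a i)) x)%N.
    rewrite /wtSR -big_split; apply: leq_sum => i _ /=; rewrite /r; lia.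
  lia.
have wt0 : forall x : bvec F nn, (forall i j, x i j = 0) ->
    wtSR (fun i => Kset sigma delta (a i)) x = 0%N.
  by move=> x Hx; rewrite /wtSR big1 // => i _; apply: rdim0 => //; apply: Hx.
have pairLB : forall x y, C x -> C y -> x <> y ->
    ((\sum_(i < ell) nn i) - k + 1 <= dSR (fun i => Kset sigma delta (a i)) x y)%N.
  move=> x y [Fx Hx] [Fy Hy] xy; apply: (LB _ (fun l => Fx l - Fy l)).
    by move=> i j; rewrite /bsub Hx Hy -sumrB; apply: eq_bigr => l _; rewrite mulrBl.
  case: (boolP [exists l, Fx l - Fy l != 0]) => [/existsP //|].
  rewrite negb_exists => /forallP Hall; exfalso; apply: xy.
  apply: functional_extensionality_dep => i; apply: functional_extensionality => j.
  rewrite Hx Hy; apply: eq_bigr => l _.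
  by have := Hall l; rewrite negbK subr_eq0 => /eqP ->.
split.
- split; [|split].
  + by exists (fun _ => 0) => i j; rewrite /bzero big1 // => l _; rewrite mul0r.
  + move=> x y [Fx Hx] [Fy Hy]; exists (fun l => Fx l + Fy l) => i j.
    by rewrite /badd Hx Hy -big_split; apply: eq_bigr => l _; rewrite mulrDl.
  + move=> c x [Fx Hx]; exists (fun l => c * Fx l) => i j.
    by rewrite /bscale Hx mulr_sumr; apply: eq_bigr => l _; rewrite mulrA.
- exists (fun t i j => Dpow sigma delta (a i) t (beta i j)); split; [|split].
  + move=> t; exists (fun l => if l == t then 1 else 0) => i j.
    rewrite (bigD1 t) //= eqxx mul1r big1 ?addr0 // => l /negbTE ->; exact: mul0r.
  + move=> lam Hlam t; apply/eqP/negP => /negP nz.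
    have := LB (fun i j => \sum_(t < k) lam t * Dpow sigma delta (a i) t (beta i j)) lam
      (fun i j => erefl) (ex_intro _ t nz).
    by rewrite wt0 //; lia.
  + by move=> x [Fx Hx]; exists Fx.
- have [z [Hz1 Hz2]] := @zdistr ell nn k.-1 ltac:(lia).
  pose s := flatten [seq [seq (a i, bn i j) | j <- iota 0 (z i)] | i <- enum 'I_ell].
  have Hs : size s = k.-1.
    rewrite /s size_flat (eq_bigr (fun i => z i)); last by move=> i _; rewrite size_map size_iota.
    by rewrite big_enum -Hz2.
  have [G [HG [HG1 HGz]]] := Gexists divF sder s.
  rewrite Hs (prednK Hk1) in HG HGz.
  rewrite Hs in HG1.
  pose x : bvec F nn := fun i j => \sum_(l < k) G l * Dpow sigma delta (a i) l (beta i j).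
  pose y0 : bvec F nn := fun i j => 0.
  have Cx : C x by exists (fun l => G l).
  have Cy : C y0 by exists (fun _ => 0) => i j; rewrite /y0 big1 // => l _; rewrite mul0r.
  have Hk' : (k.-1 < k)%N by lia.
  have xy : x <> y0.
    have nzG : (fun l : 'I_k => G l) (Ordinal Hk') != 0.
      by change (G k.-1 != 0); rewrite HG1 oner_neq0.
    move=> E; have := LB x (fun l : 'I_k => G l) (fun i j => erefl) (ex_intro (fun l : 'I_k => G l != 0) _ nzG).
    by rewrite E wt0 //; lia.
  have Hzero : forall i (j : 'I_(nn i)), (j < z i)%N -> x i j = 0.
    move=> i j Hj.
    have := HGz (a i, bn i j); rewrite bnE /= => <-; first by [].
    apply/flatten_mapP; exists i; first by rewrite mem_enum.
    by apply/mapP; exists (nat_of_ord j); [rewrite mem_iota; lia | rewrite bnE].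
  have dxy : (dSR (fun i => Kset sigma delta (a i)) x y0 <= (\sum_(i < ell) nn i) - k + 1)%N.
    rewrite /dSR /wtSR.
    have Hle : forall i : 'I_ell, (rdim (Kset sigma delta (a i)) (@bsub F ell nn x y0 i) <= nn i - z i)%N.
      move=> i; apply: rdim_le => // j Hj; rewrite /bsub /y0 subr0; exact: (Hzero i j Hj).
    apply: (@leq_trans (\sum_(i < ell) (nn i - z i))%N); first by apply: leq_sum => i _; exact: Hle.
    have Hs2 : (\sum_(i < ell) (nn i - z i) + \sum_(i < ell) z i = \sum_(i < ell) nn i)%N.
      by rewrite -big_split; apply: eq_bigr => i _ /=; rewrite subnK.
    lia.
  have [HPm Hmin] := minnatP (ex_intro (fun d => exists x y, C x /\ C y /\ x <> y /\
        dSR (fun i => Kset sigma delta (a i)) x y = d) _ (ex_intro _ x (ex_intro _ y0 (conj Cx (conj Cy (conj xy erefl)))))).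
  apply/eqP; rewrite /dSR_code eqn_leq; apply/andP; split.
    exact: (leq_trans (Hmin _ (ex_intro _ x (ex_intro _ y0 (conj Cx (conj Cy (conj xy erefl)))))) dxy).
  have [x' [y' [Cx' [Cy' [xy' <-]]]]] := HPm.
  exact: pairLB.
Qed.
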